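(* Let $G$ be a connected graph on $n=|G|\ge 2$ vertices and let $w\in V(G)$. If for every $1\le i\le \mathrm{diam}(G)$ the set $V_i(w)=\{v\in V(G)\setminus\{w\} : d(v,w)=i\}$ has exactly one element, then $$ar_w(G)=\frac{2}{n(n-1)}\sum_{(u,v)\in V_p} r_w(u,v).$$
   Context: Graphs are finite, simple and connected; $d(u,v)$ denotes the shortest-path distance and $\mathrm{diam}(G)$ the diameter. $V_p$ denotes the set of all unordered pairs $(u,v)$ of distinct vertices. A vertex $x$ resolves the pair $(u,v)$ if $d(x,u)\neq d(x,v)$. For $(u,v)\in V_p$, $R(u,v)$ is the set of all vertices resolving $(u,v)$. The resolving share of a vertex $w$ for $(u,v)$ is $r_w(u,v)=\frac{1}{|R(u,v)|}$ if $w$ resolves $u$ and $v$, and $r_w(u,v)=0$ otherwise. For a vertex $w$, $R(w)$ is the set of pairs in $V_p$ resolved by $w$, and the average resolving share of $w$ is $ar_w(G)=\frac{1}{|R(w)|}\sum_{(u,v)\in R(w)} r_w(u,v)$. *)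

(* Defs.v *)
(* A simple graph is a symmetric irreflexive relation e on a finType T. *)
From mathcomp Require Import all_boot all_order all_algebra.
Set Implicit Arguments. Unset Strict Implicit. Unset Printing Implicit Defensive.
Import Order.TTheory GRing.Theory Num.Theory.

Local Open Scope ring_scope.
Section Graph.
Variables (T : finType) (e : rel T).

Fixpoint ball (k : nat) (u : T) : {set T} :=
  match k with
  | 0 => [set u]
  | k'.+1 => ball k' u :|: [set y | [exists x in ball k' u, e x y]]
  end.

(* shortest-path distance: least k with v in ball k u (all distances in a
   connected graph on #|T| vertices are < #|T|) *)
Definition dist (u v : T) : nat := find (fun k => v \in ball k u) (iota 0 #|T|).

Definition diam : nat := \max_(u : T) \max_(v : T) dist u v.

(* unordered pairs of distinct vertices = 2-element subsets *)
Definition is_pair (p : {set T}) : bool := #|p| == 2.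

Definition resolves (x : T) (p : {set T}) : bool :=
  [exists u in p, exists v in p, dist x u != dist x v].

Definition resolving_set (p : {set T}) : {set T} := [set x | resolves x p].

Definition resolving_share (w : T) (p : {set T}) : rat :=
  if resolves w p then (#|resolving_set p|%:R)^-1 else 0.

Definition resolved_pairs (w : T) : {set {set T}} :=
  [set p | is_pair p & resolves w p].

Definition avg_resolving_share (w : T) : rat :=
  (#|resolved_pairs w|%:R)^-1 * \sum_(p in resolved_pairs w) resolving_share w p.

Definition level (w : T) (i : nat) : {set T} := [set v | (v != w) && (dist v w == i)].

End Graph.

(* Main.v *)
Require Import Defs.
From mathcomp Require Import all_boot all_order all_algebra.
Import Order.TTheory GRing.Theory Num.Theory.
Local Open Scope ring_scope.

Section H.
Variables (T : finType) (e : rel T) (e_sym : symmetric e).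

Lemma ball_sub k u : ball e k u \subset ball e k.+1 u.
Proof. by rewrite /= subsetUl. Qed.

Lemma ball_front k a b c : e a b -> c \in ball e k b -> c \in ball e k.+1 a.
Proof.
move=> eab; elim: k c => [|k IH] c /=.
  rewrite in_set1 => /eqP ->; rewrite in_setU; apply/orP; right.
  by rewrite inE; apply/existsP; exists a; rewrite in_set1 eqxx eab.
rewrite in_setU => /orP [/IH H|].
  by rewrite in_setU H.
rewrite inE => /existsP [y /andP [yb eyc]].
rewrite in_setU; apply/orP; right; rewrite inE; apply/existsP; exists y.
by rewrite (IH _ yb) eyc.
Qed.

Lemma ball_sym k u v : v \in ball e k u -> u \in ball e k v.
Proof.
elim: k u v => [|k IH] u v /=.
  by rewrite !in_set1 eq_sym.
rewrite in_setU => /orP [/IH H|].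
  by rewrite in_setU H.
rewrite inE => /existsP [x /andP [xu exv]].
have := @ball_front k v x u; rewrite /= ; apply; first by rewrite e_sym.
exact: IH.
Qed.

Lemma dist_sym u v : dist e u v = dist e v u.
Proof.
rewrite /dist; apply: eq_find => k /=.
by apply/idP/idP => /ball_sym.
Qed.

Lemma dist0 u v : (0 < #|T|)%N -> dist e v u = 0%N -> v = u.
Proof.
move=> n0; rewrite /dist; case: #|T| n0 => // n _ /=.
case: ifP => // H _; move: H; by rewrite in_set1 => /eqP.
Qed.

Lemma dist_refl u : (0 < #|T|)%N -> dist e u u = 0%N.
Proof.
move=> n0; rewrite /dist; case: #|T| n0 => // n _ /=.
by rewrite in_set1 eqxx.
Qed.
End H.

Theorem proposition3p4 (T : finType) (e : rel T)
  (e_sym : symmetric e) (e_irr : irreflexive e)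
  (e_conn : forall u v : T, connect e u v)
  (n_ge2 : (2 <= #|T|)%N) (w : T)
  (hlev : forall i : nat, (1 <= i <= diam e)%N -> #|level e w i| = 1%N) :
  avg_resolving_share e w =
    2 / (#|T| * (#|T| - 1))%:R * \sum_(p : {set T} | is_pair p) resolving_share e w p.
Proof.
have n0 : (0 < #|T|)%N by apply: leq_trans n_ge2.
have inj : forall u v, dist e w u = dist e w v -> u = v.
  move=> u v; rewrite (@dist_sym T e e_sym w u) (@dist_sym T e e_sym w v).
  case: (eqVneq u w) => [->|uw].
    by rewrite (@dist_refl T e w n0) => /esym/(@dist0 T e _ _ n0) ->.
  case: (eqVneq v w) => [->|vw].
    by rewrite (@dist_refl T e w n0) => /(@dist0 T e _ _ n0) ->.
  move=> Huv; set i := dist e u w.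
  have Hi : (1 <= i <= diam e)%N.
    apply/andP; split.
      rewrite lt0n; apply/eqP => /(@dist0 T e _ _ n0) H; by move: uw; rewrite H eqxx.
    rewrite /diam; apply: (leq_trans _ (leq_bigmax_cond u isT)).
    exact: (leq_bigmax_cond w isT).
  have := hlev i Hi => /eqP/cards1P [z Hz].
  have : u \in level e w i by rewrite inE uw eqxx.
  have : v \in level e w i by rewrite inE vw -Huv eqxx.
  by rewrite Hz !in_set1 => /eqP -> /eqP ->.
have res : forall p, is_pair p -> resolves e w p.
  move=> p /cards2P [u [v [uv ->]]].
  apply/existsP; exists u; apply/andP; split; first by rewrite !inE eqxx.
  apply/existsP; exists v; apply/andP; split; first by rewrite !inE eqxx orbT.
  by apply/negP => /eqP /inj /eqP; rewrite (negbTE uv).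
have RP : resolved_pairs e w = [set p : {set T} | #|p| == 2%N].
  apply/setP => p; rewrite !inE /is_pair.
  by case H: (#|p| == 2%N) => //=; rewrite res.
rewrite /avg_resolving_share RP card_draws.
congr (_ * _); last by apply: eq_bigl => p; rewrite inE.
have -> : (#|T| * (#|T| - 1))%N = ('C(#|T|, 2) * 2)%N.
  by rewrite bin_ffact ffactnS ffactn1 subn1.
have C0 : ('C(#|T|, 2)%:R : rat) != 0 by rewrite pnatr_eq0 -lt0n bin_gt0.
rewrite natrM invfM mulrC -mulrA mulVf ?mulr1 //.
Qed.
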